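(* Let $\mathcal{G}$ be an ultragraph and suppose there exists $n\geq1$ such that $X_1,\dots,X_n\neq\emptyset$ and $\big(\bigcup_{e\in\mathcal{G}^1}r(e)\big)\cup s(\mathcal{G}^1)=\bigcup_{i=1}^n(\overline{X_i}\cup I_i)$. Let $R$ be a field, $N$ an $R$-vector space and $\pi:L_R(\mathcal{G})\to\mathrm{Hom}_R(N)$ a representation, and suppose that $N_{r(e)}=\bigoplus_{v\in r(e)}N_v$ for each $e\in\mathcal{G}^1$. Let $M=\pi(L_R(\mathcal{G}))(N)$ and let $\widetilde{\pi}:L_R(\mathcal{G})\to\mathrm{Hom}_R(M)$ be the restriction of $\pi$. If $N_v=\bigoplus_{e\in s^{-1}(v)}N_e$ for each vertex $v$ which is not a sink, then $\widetilde{\pi}$ is equivalent to a representation induced by some $\mathcal{G}$-algebraic branching system.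
   Context: An ultragraph $\mathcal{G}=(G^0,\mathcal{G}^1,r,s)$ consists of sets $G^0$, $\mathcal{G}^1$, a map $s:\mathcal{G}^1\to G^0$ and a map $r:\mathcal{G}^1\to P(G^0)\setminus\{\emptyset\}$. $\mathcal{G}^0$ is the smallest subset of $P(G^0)$ containing $\{v\}$ ($v\in G^0$) and $r(e)$ ($e\in\mathcal{G}^1$), closed under finite unions and intersections; write $p_v=p_{\{v\}}$, $D_v=D_{\{v\}}$. A vertex $v$ is a sink if $s^{-1}(v)=\emptyset$. $L_R(\mathcal{G})$ is the universal $R$-algebra generated by $\{s_e,s_e^*:e\in\mathcal{G}^1\}\cup\{p_A:A\in\mathcal{G}^0\}$ subject to: (1) $p_\emptyset=0$, $p_Ap_B=p_{A\cap B}$, $p_{A\cup B}=p_A+p_B-p_{A\cap B}$; (2) $p_{s(e)}s_e=s_ep_{r(e)}=s_e$, $p_{r(e)}s_e^*=s_e^*p_{s(e)}=s_e^*$; (3) $s_e^*s_f=\delta_{e,f}p_{r(e)}$; (4) $p_v=\sum_{s(e)=v}s_es_e^*$ whenever $0<|s^{-1}(v)|<\infty$. For $\pi$ as in the claim, $N_A=\pi(p_A)(N)$, $N_v=N_{\{v\}}$, $N_e=\pi(s_es_e^* )(N)$. Extreme vertices: for an ultragraph, an extreme vertex is a set $A\in r(\mathcal{G}^1)\cup\{\{s(e)\}:e\in\mathcal{G}^1\}$ such that either $A=r(e)$ for some edge $e$ and $A\cap\bigcup_{f\neq e}r(f)=\emptyset=A\cap s(\mathcal{G}^1)$, or $A=\{s(e)\}$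 for some edge $e$ and $A\cap s(\mathcal{G}^1\setminus\{e\})=\emptyset=A\cap\bigcup_{f\in\mathcal{G}^1}r(f)$; this $e$ is the extreme edge of $A$. The isolated vertices of an ultragraph are the vertices lying in no $r(e)$ and not equal to any $s(e)$. Inductive construction: $I_0$ = isolated vertices of $\mathcal{G}$, $\mathbb{G}_0=(G^0\setminus I_0,\mathcal{G}^1,r,s)$; $X_1,Y_1$ = extreme vertices and extreme edges of $\mathbb{G}_0$, $\overline{X_1}=\bigcup_{A\in X_1}A$; $I_1$ = isolated vertices of $(G^0\setminus(I_0\cup\overline{X_1}),\mathcal{G}^1\setminus Y_1,r,s)$ and $\mathbb{G}_1=(G^0\setminus(I_0\cup I_1\cup\overline{X_1}),\mathcal{G}^1\setminus Y_1,r,s)$. In general, while $X_k\neq\emptyset$, $X_{k+1},Y_{k+1}$ are the extreme vertices and extreme edges of $\mathbb{G}_k$, $\overline{X_{k+1}}=\bigcup_{A\in X_{k+1}}A$, $I_{k+1}$ is the set of isolated vertices of $(G^0\setminus(I_0\cup\dots\cup I_k\cup\overline{X_1}\cup\dots\cup\overline{X_{k+1}}),\mathcal{G}^1\setminus(Y_1\cup\dots\cup Y_{k+1}),r,s)$, and $\mathbb{G}_{k+1}$ is this ultragraph with the vertices of $I_{k+1}$ also removed. A $\mathcal{G}$-algebraic branching system on a set $X$ is a family of subsets $R_e,D_A\subseteq X$ and maps $f_e$ with: (i) $R_e\cap R_f=\emptyset$ for $e\neq f$; (ii) $D_\emptyset=\emptyset$, $D_A\cap D_B=D_{A\cap B}$,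 $D_A\cup D_B=D_{A\cup B}$; (iii) $R_e\subseteq D_{s(e)}$; (iv) $D_v=\bigcup_{e\in s^{-1}(v)}R_e$ whenever $0<|s^{-1}(v)|<\infty$; (v) $f_e:D_{r(e)}\to R_e$ is a bijection. The representation induced by it acts on the $R$-module $M'$ of maps $X\to R$ (all maps, or those with finite support) by $\pi'(s_e)(\phi)(x)=\phi(f_e^{-1}(x))$ for $x\in R_e$ and $0$ otherwise, $\pi'(s_e^* )(\phi)(x)=\phi(f_e(x))$ for $x\in D_{r(e)}$ and $0$ otherwise, $\pi'(p_A)(\phi)=1_{D_A}\phi$. Two representations $\rho:L_R(\mathcal{G})\to\mathrm{Hom}_R(M)$, $\rho':L_R(\mathcal{G})\to\mathrm{Hom}_R(M')$ are equivalent if there is an $R$-module isomorphism $T:M\to M'$ with $T\circ\rho(a)=\rho'(a)\circ T$ for all $a$. *)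

(* Defs.v *)
From mathcomp Require Import all_boot all_algebra.
From mathcomp Require Import boolp classical_sets functions cardinality fsbigop.
Set Implicit Arguments. Unset Strict Implicit. Unset Printing Implicit Defensive.
Import GRing.Theory.
Local Open Scope classical_set_scope.
Local Open Scope ring_scope.

Section Ultragraph.
(* An ultragraph G = (G^0, G^1, r, s): vertices V, edges E,
   s : E -> V, r : E -> nonempty subsets of V (nonemptiness is a hypothesis
   of the main theorem). *)
Variables (V E : choiceType) (s : E -> V) (r : E -> set V).

Inductive Gen0 : set V -> Prop :=
  | Gen0_empty : Gen0 set0
  | Gen0_vertex v : Gen0 [set v]
  | Gen0_range e : Gen0 (r e)
  | Gen0_union A B : Gen0 A -> Gen0 B -> Gen0 (A `|` B)
  | Gen0_inter A B : Gen0 A -> Gen0 B -> Gen0 (A `&` B).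

(* Everything below is relative to a sub-ultragraph with vertex set W and
   edge set F (r and s are unchanged). *)

Definition extreme (F : set E) (A : set V) (e : E) : Prop :=
  F e /\
  ( (A = r e /\ (forall f, F f -> f <> e -> A `&` r f = set0)
             /\ (forall f, F f -> ~ A (s f)))
  \/ (A = [set s e] /\ (forall f, F f -> f <> e -> ~ A (s f))
             /\ (forall f, F f -> A `&` r f = set0)) ).

Definition extreme_vertices (F : set E) : set (set V) :=
  [set A | exists e, extreme F A e].
Definition extreme_edges (F : set E) : set E :=
  [set e | exists A, extreme F A e].
Definition extreme_union (F : set E) : set V :=
  \bigcup_(A in extreme_vertices F) A.

Definition isolated (W : set V) (F : set E) : set V :=
  [set v | W v /\ (forall f, F f -> ~ r f v) /\ (forall f, F f -> s f <> v)].

Definition step (WF : set V * set E) : set V * set E :=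
  let W' := WF.1 `\` extreme_union WF.2 in
  let F' := WF.2 `\` extreme_edges WF.2 in
  (W' `\` isolated W' F', F').

(* stage k = (vertex set, edge set) of \mathbb{G}_k *)
Fixpoint stage (k : nat) : set V * set E :=
  match k with
  | 0 => (setT `\` isolated setT setT, setT)
  | k'.+1 => step (stage k')
  end.

(* X_k for k >= 1 : extreme vertices of \mathbb{G}_{k-1} *)
Definition Xk (k : nat) : set (set V) := extreme_vertices (stage k.-1).2.
Definition Xbar (k : nat) : set V := extreme_union (stage k.-1).2.
Definition Ik (k : nat) : set V :=
  match k with
  | 0 => isolated setT setT
  | k'.+1 =>
      let WF := stage k' in
      let W' := WF.1 `\` extreme_union WF.2 in
      let F' := WF.2 `\` extreme_edges WF.2 in
      isolated W' F'
  end.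

Variables (R : fieldType) (N : lmodType R).

(* A representation  pi : L_R(G) -> Hom_R(N)  is given (by the universal
   property of L_R(G)) by the images of the generators:
   P A = pi(p_A), S e = pi(s_e), Ss e = pi(s_e^* ), satisfying (1)-(4). *)
Definition is_rep (P : set V -> N -> N) (S Ss : E -> N -> N) : Prop :=
  [/\ [/\ forall A, Gen0 A -> linear (P A),
          forall e, linear (S e) & forall e, linear (Ss e)],
      ((forall x, P set0 x = 0)
      /\ (forall A B, Gen0 A -> Gen0 B -> forall x, P A (P B x) = P (A `&` B) x)
      /\ (forall A B, Gen0 A -> Gen0 B -> forall x,
             P (A `|` B) x = P A x + P B x - P (A `&` B) x)),
      (forall e x, P [set s e] (S e x) = S e x /\ S e (P (r e) x) = S e x
                /\ P (r e) (Ss e x) = Ss e x /\ Ss e (P [set s e] x) = Ss e x),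
      (forall e f x, Ss e (S f x) = if e == f then P (r e) x else 0)
  &
      (forall v, s @^-1` [set v] !=set0 -> finite_set (s @^-1` [set v]) ->
         forall x, P [set v] x = \sum_(e \in s @^-1` [set v]) S e (Ss e x)) ].

(* M = pi(L_R(G))(N): the R-subspace of N spanned by all pi(a)(n), i.e. the
   smallest subspace containing pi(g)(N) for every generator g and stable
   under every pi(g) (pi(L_R(G)) is spanned by nonempty words in generators) *)
Inductive image_module (P : set V -> N -> N) (S Ss : E -> N -> N) : set N :=
  | im_P A x : Gen0 A -> image_module P S Ss (P A x)
  | im_S e x : image_module P S Ss (S e x)
  | im_Ss e x : image_module P S Ss (Ss e x)
  | im_zero : image_module P S Ss 0
  | im_add x y : image_module P S Ss x -> image_module P S Ss y ->
                 image_module P S Ss (x + y)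
  | im_scale (a : R) x : image_module P S Ss x -> image_module P S Ss (a *: x).

Definition internal_dsum (T : choiceType) (Y : set N) (I : set T)
    (Ns : T -> set N) : Prop :=
  (forall x, Y x <->
     exists (J : set T) (xs : T -> N), [/\ finite_set J, J `<=` I,
        (forall i, J i -> Ns i (xs i)) & x = \sum_(i \in J) xs i])
  /\ (forall (J : set T) (xs : T -> N), finite_set J -> J `<=` I ->
        (forall i, J i -> Ns i (xs i)) -> \sum_(i \in J) xs i = 0 ->
        forall i, J i -> xs i = 0).

(* A G-algebraic branching system on a set X. The bijection f_e : D_{r(e)} -> R_e
   is given together with its inverse finv_e. *)
Definition branching_system (X : Type) (Rs : E -> set X) (D : set V -> set X)
    (f finv : E -> X -> X) : Prop :=
  [/\ (forall e g, e <> g -> Rs e `&` Rs g = set0),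
      (D set0 = set0
      /\ (forall A B, Gen0 A -> Gen0 B -> D A `&` D B = D (A `&` B))
      /\ (forall A B, Gen0 A -> Gen0 B -> D A `|` D B = D (A `|` B))),
      (forall e, Rs e `<=` D [set s e]),
      (forall v, s @^-1` [set v] !=set0 -> finite_set (s @^-1` [set v]) ->
         D [set v] = \bigcup_(e in s @^-1` [set v]) Rs e)
    & (forall e, [/\ forall x, D (r e) x -> Rs e (f e x),
                     forall y, Rs e y -> D (r e) (finv e y),
                     forall x, D (r e) x -> finv e (f e x) = x &
                     forall y, Rs e y -> f e (finv e y) = y]) ].

Definition bs_S (X : Type) (Rs : E -> set X) (finv : E -> X -> X) (e : E)
    (phi : X -> R) : X -> R :=
  fun x => if x \in Rs e then phi (finv e x) else 0.
Definition bs_Ss (X : Type) (D : set V -> set X) (f : E -> X -> X) (e : E)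
    (phi : X -> R) : X -> R :=
  fun x => if x \in D (r e) then phi (f e x) else 0.
Definition bs_P (X : Type) (D : set V -> set X) (A : set V)
    (phi : X -> R) : X -> R :=
  fun x => if x \in D A then phi x else 0.

(* the module M' : all maps X -> R (fin = false) or those with finite
   support (fin = true) *)
Definition bs_module (X : Type) (fin : bool) : set (X -> R) :=
  [set phi | fin -> finite_set [set x | phi x != 0]].

Definition equivalent_to_induced (P : set V -> N -> N) (S Ss : E -> N -> N)
    (X : Type) (fin : bool) (Rs : E -> set X) (D : set V -> set X)
    (f finv : E -> X -> X) : Prop :=
  let M := image_module P S Ss in
  let M' := @bs_module X fin in
  exists T : N -> (X -> R),
  [/\ (forall (a : R) x y, M x -> M y -> T (a *: x + y) = (fun z => a * T x z + T y z)),
      (forall x, M x -> M' (T x)),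
      (forall x y, M x -> M y -> T x = T y -> x = y),
      (forall phi, M' phi -> exists2 x, M x & T x = phi)
    & (forall x, M x ->
         (forall e, T (S e x) = bs_S Rs finv e (T x))
         /\ (forall e, T (Ss e x) = bs_Ss D f e (T x))
         /\ (forall A, Gen0 A -> T (P A x) = bs_P D A (T x))) ].

End Ultragraph.

(* Main.v *)
Require Import Defs.
From mathcomp Require Import all_boot all_algebra.
From mathcomp Require Import boolp classical_sets functions cardinality fsbigop.
From mathcomp Require Import zify.
Import GRing.Theory.
Local Open Scope classical_set_scope.
Local Open Scope ring_scope.
Set Implicit Arguments. Unset Strict Implicit. Unset Printing Implicit Defensive.
Section Gen.
Variables (R : fieldType) (N : lmodType R).

Lemma lin0 (f : N -> N) : linear f -> f 0 = 0.
Proof.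
move=> H; have h := H 1 0 0; rewrite scale1r addr0 scale1r in h.
by apply: (addrI (f 0)); rewrite addr0 -h.
Qed.

Lemma linD (f : N -> N) x y : linear f -> f (x + y) = f x + f y.
Proof. by move=> H; have := H 1 x y; rewrite !scale1r. Qed.

Lemma linZ (f : N -> N) a x : linear f -> f (a *: x) = a *: f x.
Proof. by move=> H; have := H a x 0; rewrite addr0 (lin0 H) addr0. Qed.

Lemma lin_sum (I : Type) (f : N -> N) (l : seq I) (F : I -> N) :
  linear f -> f (\sum_(i <- l) F i) = \sum_(i <- l) f (F i).
Proof.
move=> H; elim: l => [|i l IH]; first by rewrite !big_nil lin0.
by rewrite !big_cons linD // IH.
Qed.

Definition indep (B : set N) :=
  forall (l : seq N) (c : N -> R), uniq l -> (forall x, x \in l -> B x) ->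
    \sum_(x <- l) c x *: x = 0 -> forall x, x \in l -> c x = 0.

Definition spanned (B : set N) (y : N) :=
  exists (l : seq N) (c : N -> R), (forall x, x \in l -> B x) /\
    y = \sum_(x <- l) c x *: x.

Lemma chain_fin (F : set (set N)) : total_on F subset ->
  forall l : seq N, (forall x, x \in l -> (\bigcup_(B in F) B) x) ->
  l = [::] \/ exists B, F B /\ forall x, x \in l -> B x.
Proof.
move=> tot; elim=> [|x l IH] H; first by left.
right; have [B1 FB1 B1x] := H x (mem_head _ _).
case: (IH (fun y yl => H y (@mem_behead _ (x :: l) y yl))) => [->|[B0 [FB0 HB0]]].
  by exists B1; split => // y; rewrite inE => /eqP ->.
case: (tot _ _ FB0 FB1) => sub.
- exists B1; split => // y; rewrite inE => /orP[/eqP ->//|/HB0]; exact: sub.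
- exists B0; split => // y; rewrite inE => /orP[/eqP ->|/HB0//]; exact: sub.
Qed.

Lemma basis_exists (W : set N) : W 0 ->
  (forall a x y, W x -> W y -> W (a *: x + y)) ->
  exists B, [/\ B `<=` W, indep B & W `<=` spanned B].
Proof.
move=> W0 Wc.
case: (@Zorn_bigcup N [set B | B `<=` W /\ indep B]) => [F FP tot|A [[AW Ai] Amax]].
  split.
    by move=> x [B FB Bx]; exact: (FP B FB).1.
  move=> l c ul lB sum0 x xl.
  case: (chain_fin tot lB) => [lnil|[B [FB HB]]]; first by rewrite lnil in xl.
  exact: ((FP B FB).2 l c ul HB sum0 x xl).
exists A; split => // y Wy; apply: contrapT => Ny.
have yA : ~ A y.
  move=> Ay; apply: Ny; exists [:: y], (fun _ => 1); split.
    by move=> x; rewrite inE => /eqP ->.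
  by rewrite big_seq1 scale1r.
apply: (Amax (A `|` [set y])); first split.
- by move=> x Ax; left.
- by move=> H; apply: yA; exact: (H y (or_intror erefl)).
split.
  by move=> x [/AW//|->].
move=> l c ul lB sum0.
have [yl|yl] := boolP (y \in l); last first.
  apply: Ai => // x xl; case: (lB x xl) => // xy.
  by rewrite -xy xl in yl.
have remA : forall x, x \in rem y l -> A x.
  move=> x; rewrite mem_rem_uniq // inE => /andP[xy xl].
  by case: (lB x xl) => // /eqP; rewrite (negbTE xy).
rewrite (big_rem y yl) /= in sum0.
have [cy|cy] := eqVneq (c y) 0.
  rewrite cy scale0r add0r in sum0.
  move=> x xl; have [->//|xy] := eqVneq x y.
  apply: (Ai (rem y l) c (rem_uniq _ ul) remA sum0).
  by rewrite mem_rem_uniq // inE xy.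
exfalso; apply: Ny.
exists (rem y l), (fun x => - (c y)^-1 * c x); split => //.
have -> : \sum_(x <- rem y l) (- (c y)^-1 * c x) *: x =
   - (c y)^-1 *: \sum_(x <- rem y l) c x *: x.
  by rewrite scaler_sumr; apply: eq_bigr => x _; rewrite scalerA.
have -> : \sum_(x <- rem y l) c x *: x = - (c y *: y).
  by apply/eqP; rewrite -addr_eq0 addrC sum0.
by rewrite scaleNr scalerN opprK scalerA mulVf // scale1r.
Qed.

Lemma uniq_map_inj_in (I : eqType) (T : eqType) (g : I -> T) (l : seq I) :
  uniq (map g l) -> {in l &, injective g}.
Proof.
elim: l => [//|h l IH] /= /andP[gh ul] x y.
rewrite !inE => /orP[/eqP->|xl] /orP[/eqP->|yl] //.
- by move=> ghy; rewrite ghy map_f in gh.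
- by move=> ghx; rewrite -ghx map_f in gh.
- exact: IH.
Qed.

Lemma indep_fam (B : set N) (I : eqType) (l : seq I) (g : I -> N) (c : I -> R) :
  indep B -> uniq (map g l) -> (forall i, i \in l -> B (g i)) ->
  \sum_(i <- l) c i *: g i = 0 -> forall i, i \in l -> c i = 0.
Proof.
move=> Bi ul lB sum0 i il.
pose c' (y : N) := c (nth i l (index y (map g l))).
have c'E j : j \in l -> c' (g j) = c j.
  move=> jl; rewrite /c'; congr c.
  have k_lt : (index (g j) (map g l) < size l)%N.
    by rewrite -(size_map g) index_mem map_f.
  apply: (uniq_map_inj_in ul) => //; first exact: mem_nth.
  by rewrite -(nth_map i (g i)) // nth_index // map_f.
rewrite -(c'E i il); apply: (Bi (map g l) c' ul).
- by move=> y /mapP[j jl ->]; exact: lB.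
- rewrite big_map -[RHS]sum0; apply: eq_big_seq => j jl; by rewrite c'E.
- exact: map_f.
Qed.

End Gen.
Section Comb.
Variables (V E : choiceType) (s : E -> V) (r : E -> set V) (n : nat).
Hypothesis cover : (\bigcup_e r e) `|` range s =
           [set v | exists i, (1 <= i <= n)%N /\ (Xbar s r i v \/ Ik s r i v)].

Definition prec (w v : V) : Prop := exists e, s e = v /\ r e w.

Let Fk k := (stage s r k).2.

Lemma Fk_mono j k : (j <= k)%N -> Fk k `<=` Fk j.
Proof.
move=> /subnK <-; elim: (k - j)%N => [|m IH] //= x.
by rewrite addSn => -[/IH].
Qed.

Lemma Fk_dead e : ~ Fk n e.
Proof.
have : [set v | exists i, (1 <= i <= n)%N /\ (Xbar s r i v \/ Ik s r i v)] (s e).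
  by rewrite -cover; right; exists e.
move=> [i [/andP[i1 iN] H]].
suff : ~ Fk i e by move=> H1 H2; apply: H1; exact: (Fk_mono iN H2).
case: i i1 iN H => [//|k] _ _ [|].
- move=> [A [g Hg] Av] /=.
  case: Hg => Fg [[AE [_ Hs]]|[AE [Hs Hs2]]].
  + by move=> [Fe _]; exact: (Hs e Fe).
  + move=> [Fe Ne]; apply: Ne; exists A.
    have eg : e = g.
      apply: contrapT => neg; exact: (Hs e Fe neg Av).
    by rewrite eg; split => //; right.
- by move=> [_ [_ Hs]] He; exact: (Hs e He).
Qed.

Definition dies k e := Fk k e /\ ~ Fk k.+1 e.

Lemma dies_ex e : exists k, (k < n)%N /\ dies k e.
Proof.
have F0 : Fk 0 e by [].
have := @Fk_dead e.
elim: n F0 => [//|m IH] F0 Fm.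
have [Fm'|Fm'] := pselect (Fk m e).
  by exists m; split.
by have [k [km D]] := IH F0 Fm'; exists k; split => //; apply: ltnW.
Qed.

Definition Rat k e := Fk k e /\ (forall f, Fk k f -> ~ r e (s f)).
Definition Sat k e := Fk k e /\ (forall f, Fk k f -> ~ r f (s e)).

Lemma dies_type k e : dies k e -> Rat k e \/ Sat k e.
Proof.
move=> [Fe NFe].
have : extreme_edges s r (Fk k) e.
  apply: contrapT => H; apply: NFe => /=; split => //.
case=> A [_ [[AE [_ Hs]]|[AE [_ Hs]]]].
- by left; split => // f Ff; rewrite -AE; exact: Hs.
- right; split => // f Ff rf; have := Hs f Ff.
  by move=> /eqP; apply/negP; apply/set0P; exists (s e); split => //; rewrite AE.
Qed.

Lemma dies_lt j k e : dies j e -> Fk k e -> (k <= j)%N.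
Proof.
move=> [_ N] Fe; rewrite leqNgt; apply/negP => jk.
by apply: N; exact: (Fk_mono jk Fe).
Qed.

Definition Qe e := forall w, r e w -> Acc prec w.

Lemma claimR k : forall e, dies k e -> Rat k e -> Qe e.
Proof.
elim/ltn_ind: k => k IH e De [Fe He] w rw; constructor => y [g [sg rg]].
have [j [jn Dg]] := dies_ex g.
have jk : (j < k)%N.
  rewrite ltnNge; apply/negP => kj.
  by apply: (He g (Fk_mono kj Dg.1)); rewrite sg.
case: (dies_type Dg) => [Rg|[_ Sg]].
  exact: (IH j jk g Dg Rg).
exfalso; apply: (Sg e (Fk_mono (ltnW jk) Fe)); by rewrite sg.
Qed.

Lemma claimS m : forall k e, (n - k <= m)%N -> (k < n)%N -> dies k e -> Sat k e -> Qe e.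
Proof.
elim: m => [|m IH] k e km kn De [Fe He] w rw.
  exfalso; lia.
constructor => y [g [sg rg]].
have [j [jn Dg]] := dies_ex g.
case: (dies_type Dg) => [Rg|Sg].
  exact: (claimR Dg Rg).
have kj : (k < j)%N.
  rewrite ltnNge; apply/negP => jk.
  by apply: (Sg.2 e (Fk_mono jk Fe)); rewrite sg.
apply: (IH j g _ jn Dg Sg) => //; lia.
Qed.

Lemma all_Acc v : Acc prec v.
Proof.
constructor => y [e [se re]].
have [k [kn De]] := dies_ex e.
case: (dies_type De) => [H|H].
  exact: (claimR De H).
exact: (claimS (leqnn _) kn De H).
Qed.

End Comb.
Section Main.
Variables (V E : choiceType) (s : E -> V) (r : E -> set V).
Variables (R : fieldType) (N : lmodType R).
Variables (P : set V -> N -> N) (S Ss : E -> N -> N).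
Hypothesis Hrep : is_rep s r P S Ss.
Hypothesis Hrange : forall e, internal_dsum (P (r e) @` setT) (r e)
                        (fun v => P [set v] @` setT).
Hypothesis Hsrc : forall v, s @^-1` [set v] !=set0 ->
            internal_dsum (P [set v] @` setT) (s @^-1` [set v])
                          (fun e => (fun x => S e (Ss e x)) @` setT).
Hypothesis Hacc : forall v, Acc (prec s r) v.
Variable B : V -> set N.
Hypothesis HB : forall w, [/\ B w `<=` P [set w] @` setT, indep (B w)
                          & P [set w] @` setT `<=` spanned (B w)].

Lemma linP A : Gen0 r A -> linear (P A).
Proof. by move=> GA; case: Hrep => [[H _ _] _ _ _ _]; apply: H. Qed.
Lemma linS e : linear (S e).
Proof. by case: Hrep => [[_ H _] _ _ _ _]; apply: H. Qed.
Lemma linSs e : linear (Ss e).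
Proof. by case: Hrep => [[_ _ H] _ _ _ _]; apply: H. Qed.
Lemma P0 x : P set0 x = 0.
Proof. by case: Hrep => _ [-> _]. Qed.
Lemma PI A A' x : Gen0 r A -> Gen0 r A' -> P A (P A' x) = P (A `&` A') x.
Proof. by move=> G1 G2; case: Hrep => _ [_ [H _]] _ _ _; apply: H. Qed.
Lemma PU A A' x : Gen0 r A -> Gen0 r A' ->
  P (A `|` A') x = P A x + P A' x - P (A `&` A') x.
Proof. by move=> G1 G2; case: Hrep => _ [_ [_ H]] _ _ _; apply: H. Qed.
Lemma rel2 e x : [/\ P [set s e] (S e x) = S e x, S e (P (r e) x) = S e x,
                P (r e) (Ss e x) = Ss e x & Ss e (P [set s e] x) = Ss e x].
Proof. by case: Hrep => _ _ H _ _; have [? [? [? ?]]] := H e x; split. Qed.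
Lemma rel3 e f x : Ss e (S f x) = if e == f then P (r e) x else 0.
Proof. by case: Hrep => _ _ _ H _; apply: H. Qed.

Lemma GV v : Gen0 r [set v]. Proof. exact: Gen0_vertex. Qed.
Lemma GR e : Gen0 r (r e). Proof. exact: Gen0_range. Qed.
Local Hint Resolve GV GR : core.

Definition TT := (seq E * V * N)%type.
Definition startv (a : seq E) (w : V) : V := if a is e :: _ then s e else w.
Fixpoint pathok (a : seq E) (w : V) : Prop :=
  if a is e :: a' then r e (startv a' w) /\ pathok a' w else True.
Definition validP (t : TT) : Prop :=
  [/\ B t.1.2 t.2, (forall e, s e <> t.1.2) & pathok t.1.1 t.1.2].
Definition X := {t : TT | `[< validP t >]}.

Definition aX (x : X) := (val x).1.1.
Definition wX (x : X) := (val x).1.2.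
Definition bX (x : X) := (val x).2.
Definition start (x : X) := startv (aX x) (wX x).
Definition iotaT (x : X) : N := foldr S (bX x) (aX x).
Definition fX (e : E) (x : X) : X := insubd x (e :: aX x, wX x, bX x).
Definition finvX (e : E) (x : X) : X := insubd x (behead (aX x), wX x, bX x).
Definition Rs (e : E) : set X := [set x | ohead (aX x) = Some e].
Definition D (A : set V) : set X := [set x | A (start x)].

Lemma validX (x : X) : validP (val x).
Proof. exact/asboolP/(valP x). Qed.

Lemma valE (x : X) : val x = (aX x, wX x, bX x).
Proof. by rewrite /aX /wX /bX; case: (val x) => [[]]. Qed.

Lemma fX_val e x : D (r e) x -> val (fX e x) = (e :: aX x, wX x, bX x).
Proof.
move=> Dx; rewrite val_insubd; case: (validX x); rewrite valE /= => Bx sx px.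
by rewrite asboolT.
Qed.

Lemma finvX_val e x : Rs e x -> val (finvX e x) = (behead (aX x), wX x, bX x).
Proof.
rewrite /Rs /= => Rx; rewrite val_insubd; case: (validX x); rewrite valE /= => Bx sx.
by case: (aX x) Rx => //= g a [->] [_ pa]; rewrite asboolT.
Qed.

Lemma fX_Rs e x : D (r e) x -> Rs e (fX e x).
Proof. by move=> Dx; rewrite /Rs /= /aX fX_val. Qed.

Lemma finvX_D e x : Rs e x -> D (r e) (finvX e x).
Proof.
move=> Rx; rewrite /D /= /start /aX /wX finvX_val //=.
case: (validX x); rewrite valE /= => _ _; move: Rx; rewrite /Rs /=.
by case: (aX x) => //= g a [->] [].
Qed.

Lemma finv_f e x : D (r e) x -> finvX e (fX e x) = x.
Proof.
move=> Dx; apply: val_inj; rewrite finvX_val; last exact: fX_Rs.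
by rewrite /aX /wX /bX fX_val //= -valE.
Qed.

Lemma f_finv e x : Rs e x -> fX e (finvX e x) = x.
Proof.
move=> Rx; apply: val_inj; rewrite fX_val; last exact: finvX_D.
rewrite /aX /wX /bX finvX_val //= -/(aX x) -/(wX x) -/(bX x) valE.
by move: Rx; rewrite /Rs /=; case: (aX x) => //= g a [->].
Qed.

Lemma size_finv e x : Rs e x -> size (aX (finvX e x)) = (size (aX x)).-1.
Proof. by move=> Rx; rewrite {1}/aX finvX_val //= size_behead. Qed.

Lemma iota_fX e x : D (r e) x -> iotaT (fX e x) = S e (iotaT x).
Proof. by move=> Dx; rewrite /iotaT {1}/aX {1}/bX fX_val. Qed.

Lemma bs_ok : branching_system s r Rs D fX finvX.
Proof.
split.
- move=> e g eg; apply/seteqP; split => x //= [h1 h2].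
  by apply: eg; move: h1 h2; rewrite /Rs /= => -> [].
- split; first by apply/seteqP; split => x.
  split => A A' _ _; by apply/seteqP; split => x.
- move=> e x; rewrite /Rs /D /start /=.
  by case: (aX x) => //= g a [->].
- move=> v [e0 se0] _; apply/seteqP; split => x.
  + rewrite /D /start /=; case E1: (aX x) => [|g a] /=.
    * move=> wv; case: (validX x); rewrite valE /= => _ sx _.
      by exfalso; apply: (sx e0); rewrite se0 wv.
    * by move=> sg; exists g => //; rewrite /Rs /= E1.
  + move=> [g sg]; rewrite /Rs /D /start /= => Rx.
    by move: Rx sg; case: (aX x) => //= g' a [->].
- move=> e; split.
  + exact: fX_Rs.
  + exact: finvX_D.
  + exact: finv_f.
  + exact: f_finv.
Qed.

Lemma Nvfix x : P [set start x] (iotaT x) = iotaT x.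
Proof.
rewrite /start /iotaT; case: (validX x); rewrite valE /= => Bx _ _.
case: (aX x) => [|e a] /=; last by case: (rel2 e (foldr S (bX x) a)).
have [HB1 _ _] := HB (wX x); have [y _ <-] := HB1 _ Bx.
by rewrite PI // setIid.
Qed.

Lemma act_P A x : Gen0 r A ->
  P A (iotaT x) = if x \in D A then iotaT x else 0.
Proof.
move=> GA; rewrite -{1}Nvfix PI //.
case: ifP => [/set_mem Ax|/negP nAx].
  have -> : A `&` [set start x] = [set start x].
    by apply/seteqP; split => [v [] //|v ->]; split.
  exact: Nvfix.
have -> : A `&` [set start x] = set0.
  by apply/seteqP; split => [v [Av vx]|v //]; apply: nAx; apply: mem_set; rewrite /D /= -vx.
exact: P0.
Qed.

Lemma act_S e x : S e (iotaT x) = if x \in D (r e) then iotaT (fX e x) else 0.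
Proof.
case: ifP => [/set_mem Dx|/negP nDx]; first by rewrite iota_fX.
have [_ H _ _] := rel2 e (iotaT x).
rewrite -H -Nvfix PI //.
have -> : r e `&` [set start x] = set0.
  by apply/seteqP; split => [v [Av vx]|v //]; apply: nDx; apply: mem_set; rewrite /D /= -vx.
by rewrite P0 lin0 //; exact: linS.
Qed.

Lemma act_Ss e x : Ss e (iotaT x) = if x \in Rs e then iotaT (finvX e x) else 0.
Proof.
case E1: (aX x) => [|g a].
- have -> : (x \in Rs e) = false.
    by apply/negP => /set_mem; rewrite /Rs /= E1.
  have [_ _ _ H] := rel2 e (iotaT x).
  rewrite -H -Nvfix PI //.
  have -> : [set s e] `&` [set start x] = set0.
    apply/seteqP; split => [v [-> sx]|v //].
    case: (validX x); rewrite valE /= => _ sw _.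
    by apply: (sw e); move: sx; rewrite /start E1.
  by rewrite P0 lin0 //; exact: linSs.
- have -> : iotaT x = S g (foldr S (bX x) a) by rewrite /iotaT E1.
  rewrite rel3; case: eqP => [eg|neg].
  + rewrite -eg in E1 *.
    have Rx : Rs e x by rewrite /Rs /= E1.
    rewrite (mem_set Rx).
    have -> : foldr S (bX x) a = iotaT (finvX e x).
      by rewrite /iotaT {1}/aX {2}/bX finvX_val //= E1.
    by rewrite act_P // (mem_set (finvX_D Rx)).
  + have -> : (x \in Rs e) = false.
      by apply/negP => /set_mem; rewrite /Rs /= E1 => -[eg]; apply: neg; rewrite eg.
    by [].
Qed.

Definition Sp (y : N) := exists ps : seq (R * X), y = \sum_(p <- ps) p.1 *: iotaT p.2.

Lemma Sp0 : Sp 0.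
Proof. by exists [::]; rewrite big_nil. Qed.

Lemma Sp_iota x : Sp (iotaT x).
Proof. by exists [:: (1, x)]; rewrite big_seq1 scale1r. Qed.

Lemma Sp_lin a y z : Sp y -> Sp z -> Sp (a *: y + z).
Proof.
move=> [p1 ->] [p2 ->]; exists (map (fun p => (a * p.1, p.2)) p1 ++ p2).
rewrite big_cat big_map /= scaler_sumr; congr (_ + _).
by apply: eq_bigr => p _; rewrite scalerA.
Qed.

Lemma Sp_add y z : Sp y -> Sp z -> Sp (y + z).
Proof. by move=> Hy Hz; rewrite -[y]scale1r; exact: Sp_lin. Qed.

Lemma Sp_scale a y : Sp y -> Sp (a *: y).
Proof. by move=> Hy; rewrite -[_ *: _]addr0; apply: Sp_lin => //; exact: Sp0. Qed.

Lemma Sp_sum (I : eqType) (l : seq I) (F : I -> N) :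
  (forall i, i \in l -> Sp (F i)) -> Sp (\sum_(i <- l) F i).
Proof.
move=> H; rewrite big_seq; apply: big_ind => //; [exact: Sp0|exact: Sp_add].
Qed.

Lemma Sp_fsum (I : choiceType) (J : set I) (F : I -> N) :
  finite_set J -> (forall i, J i -> Sp (F i)) -> Sp (\sum_(i \in J) F i).
Proof.
move=> fJ H; rewrite fsbig_finite //; apply: Sp_sum => i.
by rewrite in_fset_set // => /set_mem; exact: H.
Qed.

Lemma Sp_pres (g : N -> N) : linear g -> (forall x, Sp (g (iotaT x))) ->
  forall y, Sp y -> Sp (g y).
Proof.
move=> lg H y [ps ->]; rewrite lin_sum //; apply: Sp_sum => p _.
by rewrite linZ //; apply: Sp_scale.
Qed.

Lemma Sp_presP A y : Gen0 r A -> Sp y -> Sp (P A y).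
Proof.
move=> GA; apply: Sp_pres; first exact: linP.
by move=> x; rewrite act_P //; case: ifP => _; [exact: Sp_iota|exact: Sp0].
Qed.

Lemma Sp_presS e y : Sp y -> Sp (S e y).
Proof.
apply: Sp_pres; first exact: linS.
by move=> x; rewrite act_S //; case: ifP => _; [exact: Sp_iota|exact: Sp0].
Qed.

Lemma Sp_presSs e y : Sp y -> Sp (Ss e y).
Proof.
apply: Sp_pres; first exact: linSs.
by move=> x; rewrite act_Ss //; case: ifP => _; [exact: Sp_iota|exact: Sp0].
Qed.

Lemma Sp_range_gen e z : (forall w, r e w -> forall y, Sp (P [set w] y)) ->
  Sp (P (r e) z).
Proof.
move=> IH.
have Y0 : (P (r e) @` setT) (P (r e) z) by exists z.
have [J [xs [fJ JI Hxs ->]]] := ((Hrange e).1 (P (r e) z)).1 Y0.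
apply: Sp_fsum => // w Jw; have [y _ <-] := Hxs w Jw.
exact: IH (JI w Jw) y.
Qed.

Lemma Sp_Pv v : forall x, Sp (P [set v] x).
Proof.
elim: (Hacc v) => {}v _ IH x.
have [[e0 se0]|nsrc] := pselect (exists e, s e = v).
- have ne : s @^-1` [set v] !=set0 by exists e0.
  have Y0 : (P [set v] @` setT) (P [set v] x) by exists x.
  have [J [xs [fJ JI Hxs ->]]] := ((Hsrc ne).1 (P [set v] x)).1 Y0.
  apply: Sp_fsum => // e Je; have [y _ <-] := Hxs e Je.
  apply: Sp_presS; have [_ _ H _] := rel2 e y; rewrite -H.
  apply: Sp_range_gen => w rw y'; apply: IH.
  by exists e; split => //; exact: (JI e Je).
- have [_ _ HB3] := HB v.
  have [l [c [lB ->]]] := HB3 (P [set v] x) (ex_intro2 _ _ x I erefl).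
  apply: Sp_sum => y yl; apply: Sp_scale.
  have vy : `[< validP ([::], v, y) >].
    by apply/asboolP; split => //=; [exact: lB | move=> e se; apply: nsrc; exists e].
  exact: (Sp_iota (exist (fun t : TT => `[< validP t >]) ([::], v, y) vy)).
Qed.

Lemma Sp_PA A x : Gen0 r A -> Sp (P A x).
Proof.
move=> GA; elim: GA x => [x|v x|e x|A1 A2 G1 IH1 G2 IH2 x|A1 A2 G1 IH1 G2 IH2 x].
- by rewrite P0; exact: Sp0.
- exact: Sp_Pv.
- by apply: Sp_range_gen => w _ y; exact: Sp_Pv.
- rewrite PU // -PI //; apply: Sp_add; first exact: Sp_add.
  by rewrite -scaleN1r; apply: Sp_scale; apply: Sp_presP.
- by rewrite -PI //; apply: Sp_presP.
Qed.

Definition M := image_module r P S Ss.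

Lemma Sp_M y : M y -> Sp y.
Proof.
elim => {y}.
- by move=> A x GA; exact: Sp_PA.
- by move=> e x; have [<- _ _ _] := rel2 e x; exact: Sp_Pv.
- by move=> e x; have [_ _ <- _] := rel2 e x; exact: Sp_PA.
- exact: Sp0.
- by move=> x y _ ? _ ?; exact: Sp_add.
- by move=> a x _ ?; exact: Sp_scale.
Qed.

Lemma M_iota x : M (iotaT x).
Proof.
rewrite /iotaT; case: (validX x); rewrite valE /= => Bx _ _.
case: (aX x) => [|e a] /=; last exact: im_S.
have [HB1 _ _] := HB (wX x); have [y _ <-] := HB1 _ Bx.
exact: im_P.
Qed.

Lemma M_sum (I : Type) (l : seq I) (F : I -> N) :
  (forall i, M (F i)) -> M (\sum_(i <- l) F i).
Proof.
move=> H; apply: big_ind => //; [exact: im_zero|exact: im_add].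
Qed.

Lemma M_Sp y : Sp y -> M y.
Proof.
move=> [ps ->]; apply: M_sum => p; apply: im_scale; exact: M_iota.
Qed.

Lemma base (l : seq X) (phi : X -> R) : uniq l ->
  (forall z, z \in l -> aX z != [::] -> phi z = 0) ->
  \sum_(z <- l) phi z *: iotaT z = 0 -> forall z, z \in l -> phi z = 0.
Proof.
move=> ul H sum0 z zl.
have [az|] := eqVneq (aX z) [::]; last exact: H.
pose w := wX z.
pose l' := [seq t <- l | (aX t == [::]) && (wX t == w)].
have sum' : \sum_(t <- l') phi t *: bX t = 0.
  have := congr1 (P [set w]) sum0; rewrite (@lin_sum _ _ _ _ _ _ (linP (GV w))) (lin0 (linP (GV w))) => h; rewrite -[RHS]h.
  rewrite big_filter big_mkcond /=; apply: eq_big_seq => t tl.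
  rewrite (linZ _ _ (linP (GV w))) act_P //.
  case: (eqVneq (aX t) [::]) => [at0|atn].
  - rewrite /=.
    have e1 : iotaT t = bX t by rewrite /iotaT at0.
    have st : start t = wX t by rewrite /start at0.
    case: (boolP (wX t == w)) => tw /=.
    + by rewrite (mem_set (_ : D [set w] t)) ?e1 // /D /= st; exact/eqP.
    + rewrite ifF ?scaler0 //; apply/negP => /set_mem.
      by rewrite /D /= st => /eqP; rewrite (negbTE tw).
  - by rewrite /= H // scale0r.
have inj : {in l' &, injective bX}.
  move=> t1 t2; rewrite !mem_filter => /andP[/andP[/eqP a1 /eqP w1] _].
  move=> /andP[/andP[/eqP a2 /eqP w2] _] bb.
  by apply: val_inj; rewrite !valE a1 a2 w1 w2 bb.
have [_ HBi _] := HB w.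
apply: (indep_fam (B:=B w) (l:=l') (g:=bX) (c:=phi)) => //.
- by rewrite (map_inj_in_uniq inj) filter_uniq.
- move=> t; rewrite mem_filter => /andP[/andP[_ /eqP <-] _].
  by case: (validX t); rewrite valE.
- by rewrite /l' mem_filter /= az zl andbT; apply/eqP.
Qed.

Lemma indepX L : forall (l : seq X) (phi : X -> R), uniq l ->
  (forall z, z \in l -> (size (aX z) <= L)%N) ->
  \sum_(z <- l) phi z *: iotaT z = 0 -> forall z, z \in l -> phi z = 0.
Proof.
elim: L => [|L IH] l phi ul sz sum0; apply: base => // z zl az.
  by have := sz z zl; rewrite leqn0 size_eq0 (negbTE az).
case E1: (aX z) az => [//|e a] _.
pose lf := [seq t <- l | ohead (aX t) == Some e].
pose l' := map (finvX e) lf.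
have Rlf t : t \in lf -> Rs e t by rewrite mem_filter => /andP[/eqP h _].
have sum1 : \sum_(u <- l') phi (fX e u) *: iotaT u = 0.
  have := congr1 (Ss e) sum0; rewrite (@lin_sum _ _ _ _ _ _ (linSs e)) (lin0 (linSs e)) => h0; rewrite -[RHS]h0.
  rewrite big_map big_filter big_mkcond /=; apply: eq_big_seq => t tl.
  rewrite (linZ _ _ (linSs e)) act_Ss.
  case: (eqVneq (ohead (aX t)) (Some e)) => [h|h].
  - have Rt : Rs e t by [].
    by rewrite (mem_set Rt) f_finv.
  - rewrite ifF ?scaler0 //; apply/negP => /set_mem; rewrite /Rs /= => h'.
    by rewrite h' eqxx in h.
have ul' : uniq l'.
  rewrite map_inj_in_uniq ?filter_uniq // => t1 t2 t1l t2l ff.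
  by rewrite -(f_finv (Rlf _ t1l)) ff f_finv //; exact: Rlf.
have sz' : forall u, u \in l' -> (size (aX u) <= L)%N.
  move=> u /mapP[t tl ->]; rewrite size_finv; last exact: Rlf.
  have := sz t; rewrite mem_filter in tl; case/andP: tl => _ tl.
  by move=> /(_ tl); case: (size (aX t)).
have zf : z \in lf by rewrite mem_filter E1 eqxx zl.
have := IH l' (fun u => phi (fX e u)) ul' sz' sum1 (finvX e z) (map_f _ zf).
by rewrite f_finv //; exact: Rlf.
Qed.

Lemma bound_ex (l : seq X) : exists L, forall z, z \in l -> (size (aX z) <= L)%N.
Proof.
elim: l => [|x l [L HL]]; first by exists 0%N.
exists (maxn (size (aX x)) L) => z; rewrite inE => /orP[/eqP ->|zl].
  exact: leq_maxl.
exact: leq_trans (HL z zl) (leq_maxr _ _).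
Qed.

Lemma indep_all (l : seq X) (phi : X -> R) : uniq l ->
  \sum_(z <- l) phi z *: iotaT z = 0 -> forall z, z \in l -> phi z = 0.
Proof. by have [L HL] := bound_ex l; move=> ul; exact: (@indepX L l phi ul HL). Qed.

Definition repr (y : N) (phi : X -> R) := exists l : seq X,
  [/\ uniq l, (forall z, z \notin l -> phi z = 0) &
      y = \sum_(z <- l) phi z *: iotaT z].

Lemma extend (l u : seq X) phi : uniq l -> uniq u -> {subset l <= u} ->
  (forall z, z \notin l -> phi z = 0) ->
  \sum_(z <- l) phi z *: iotaT z = \sum_(z <- u) phi z *: iotaT z.
Proof.
move=> ul uu lu H.
rewrite [RHS](bigID (fun z => z \in l)) /= [Y in _ + Y]big1 ?addr0; last first.
  by move=> z /H ->; rewrite scale0r.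
rewrite -[RHS]big_filter; apply: perm_big; apply: uniq_perm => //.
  exact: filter_uniq.
by move=> z; rewrite mem_filter; case: (boolP (z \in l)) => // /lu ->.
Qed.

Lemma Sp_repr y : Sp y -> exists phi, repr y phi.
Proof.
move=> [ps ->].
exists (fun z => \sum_(p <- ps | z == p.2) p.1), (undup (map snd ps)); split.
- exact: undup_uniq.
- move=> z zn; apply: big1_seq => p /andP[/eqP zp pps].
  by rewrite zp mem_undup (map_f snd pps) in zn.
- symmetry.
  transitivity (\sum_(z <- undup (map snd ps)) \sum_(p <- ps)
                  (if z == p.2 then p.1 *: iotaT p.2 else 0)).
    apply: eq_bigr => z _; rewrite scaler_suml big_mkcond; apply: eq_bigr => p _.
    by case: eqP => [->|].
  rewrite exchange_big /=; apply: eq_big_seq => p pps.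
  rewrite -big_mkcond /= -big_filter.
  have -> : [seq z <- undup (map snd ps) | z == p.2] = [:: p.2].
    apply: filter_pred1_uniq; first exact: undup_uniq.
    by rewrite mem_undup; apply: map_f.
  by rewrite big_seq1.
Qed.

Lemma union_facts (l1 l2 : seq X) : let u := undup (l1 ++ l2) in
  [/\ uniq u, {subset l1 <= u} & {subset l2 <= u}].
Proof.
split; first exact: undup_uniq.
- by move=> z zl; rewrite mem_undup mem_cat zl.
- by move=> z zl; rewrite mem_undup mem_cat zl orbT.
Qed.

Lemma repr_uniq y phi1 phi2 : repr y phi1 -> repr y phi2 -> phi1 = phi2.
Proof.
move=> [l1 [u1 z1 e1]] [l2 [u2 z2 e2]].
have [uu s1 s2] := union_facts l1 l2.
set u := undup _ in uu s1 s2.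
have Hd : \sum_(z <- u) (phi1 z - phi2 z) *: iotaT z = 0.
  under eq_bigr do rewrite scalerBl.
  by rewrite sumrB -(extend u1 uu s1 z1) -(extend u2 uu s2 z2) -e1 -e2 subrr.
apply: funext => z.
have [zu|zu] := boolP (z \in u).
  by apply/eqP; rewrite -subr_eq0; apply/eqP; exact: (indep_all uu Hd zu).
have h1 : z \notin l1 by apply: contra zu; exact: s1.
have h2 : z \notin l2 by apply: contra zu; exact: s2.
by rewrite z1 // z2.
Qed.

Lemma repr_lin a y y' phi1 phi2 : repr y phi1 -> repr y' phi2 ->
  repr (a *: y + y') (fun z => a * phi1 z + phi2 z).
Proof.
move=> [l1 [u1 z1 e1]] [l2 [u2 z2 e2]].
have [uu s1 s2] := union_facts l1 l2.
set u := undup _ in uu s1 s2.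
exists u; split => //.
  move=> z zu.
  have h1 : z \notin l1 by apply: contra zu; exact: s1.
  have h2 : z \notin l2 by apply: contra zu; exact: s2.
  by rewrite z1 // z2 // mulr0 addr0.
rewrite e1 e2 (extend u1 uu s1 z1) (extend u2 uu s2 z2) scaler_sumr -big_split /=.
by apply: eq_bigr => z _; rewrite scalerDl scalerA.
Qed.

Definition T (y : N) : X -> R :=
  match pselect (exists phi, repr y phi) with
  | left h => sval (cid h)
  | right _ => fun _ => 0
  end.

Lemma T_repr' y : (exists phi, repr y phi) -> repr y (T y).
Proof. by rewrite /T; case: pselect => [h' _|//]; exact: (svalP (cid h')). Qed.

Lemma T_repr y : M y -> repr y (T y).
Proof. by move=> My; apply: T_repr'; apply: Sp_repr; apply: Sp_M. Qed.

Lemma T_eq y phi : repr y phi -> T y = phi.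
Proof. by move=> H; apply: repr_uniq (T_repr' (ex_intro _ _ H)) H. Qed.

Lemma T_lin a y y' : M y -> M y' -> T (a *: y + y') = (fun z => a * T y z + T y' z).
Proof. by move=> My My'; apply: T_eq; apply: repr_lin; apply: T_repr. Qed.

Definition delta (x : X) : X -> R := fun t => if t == x then 1 else 0.

Lemma repr_iota x : repr (iotaT x) (delta x).
Proof.
exists [:: x]; split => //.
  by move=> z; rewrite inE => zn; rewrite /delta (negbTE zn).
by rewrite big_seq1 /delta eqxx scale1r.
Qed.

Lemma repr0 : repr 0 (fun _ => 0).
Proof. by exists [::]; split => //; rewrite big_nil. Qed.

Lemma T_sum (I : Type) (l : seq I) (c : I -> R) (F : I -> N) :
  (forall i, M (F i)) ->
  T (\sum_(i <- l) c i *: F i) = fun t => \sum_(i <- l) c i * T (F i) t.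
Proof.
move=> MF; elim: l => [|i l IH].
  by rewrite big_nil (T_eq repr0); apply: funext => t; rewrite big_nil.
rewrite big_cons T_lin //; last first.
  by apply: M_sum => j; apply: im_scale; exact: MF.
by rewrite IH; apply: funext => t; rewrite big_cons.
Qed.

Lemma sum_pick (l : seq X) (phi g : X -> R) u : uniq l ->
  (forall z, z \notin l -> phi z = 0) -> (forall z, g z = if z == u then 1 else 0) ->
  \sum_(z <- l) phi z * g z = phi u.
Proof.
move=> ul H Hg; have [ul'|ul'] := boolP (u \in l).
  rewrite (bigD1_seq u) //= Hg eqxx mulr1 big1 ?addr0 // => z zu.
  by rewrite Hg (negbTE zu) mulr0.
rewrite (H u ul') big1_seq // => z /andP[_ zl]; rewrite Hg.
by case: eqP => [zu'|_]; [by rewrite -zu' zl in ul' | rewrite mulr0].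
Qed.

Lemma sum_zero (l : seq X) (phi g : X -> R) : (forall z, g z = 0) ->
  \sum_(z <- l) phi z * g z = 0.
Proof. by move=> Hg; apply: big1 => z _; rewrite Hg mulr0. Qed.

Lemma inter_S e y : M y -> T (S e y) = bs_S Rs finvX e (T y).
Proof.
move=> My; have [l [ul zl ye]] := T_repr My.
rewrite {1}ye (@lin_sum _ _ _ _ _ _ (linS e)).
under eq_bigr do rewrite (linZ _ _ (linS e)).
rewrite T_sum; last by move=> z; exact: im_S.
apply: funext => t /=.
have Tz z : T (S e (iotaT z)) =
    if z \in D (r e) then delta (fX e z) else (fun _ => 0).
  by rewrite act_S; case: ifP => _; [exact: T_eq (repr_iota _)|exact: T_eq repr0].
rewrite /bs_S; case: ifP => [/set_mem Rt|/negP Rt].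
  apply: sum_pick ul zl _ => z; rewrite Tz.
  case: ifP => [/set_mem Dz|/negP Dz] /=.
    rewrite /delta; congr (if _ then _ else _).
    by apply/eqP/eqP => [->|->]; [rewrite finv_f|rewrite f_finv].
  case: eqP => // zE; exfalso; apply: Dz; rewrite zE; apply: mem_set.
  exact: finvX_D.
apply: sum_zero => z; rewrite Tz; case: ifP => [/set_mem Dz|_] //=.
rewrite /delta; case: eqP => // tE; exfalso; apply: Rt; rewrite tE.
by apply: mem_set; exact: fX_Rs.
Qed.

Lemma inter_Ss e y : M y -> T (Ss e y) = bs_Ss r D fX e (T y).
Proof.
move=> My; have [l [ul zl ye]] := T_repr My.
rewrite {1}ye (@lin_sum _ _ _ _ _ _ (linSs e)).
under eq_bigr do rewrite (linZ _ _ (linSs e)).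
rewrite T_sum; last by move=> z; exact: im_Ss.
apply: funext => t /=.
have Tz z : T (Ss e (iotaT z)) =
    if z \in Rs e then delta (finvX e z) else (fun _ => 0).
  by rewrite act_Ss; case: ifP => _; [exact: T_eq (repr_iota _)|exact: T_eq repr0].
rewrite /bs_Ss; case: ifP => [/set_mem Dt|/negP Dt].
  apply: sum_pick ul zl _ => z; rewrite Tz.
  case: ifP => [/set_mem Rz|/negP Rz] /=.
    rewrite /delta; congr (if _ then _ else _).
    by apply/eqP/eqP => [->|->]; [rewrite f_finv|rewrite finv_f].
  case: eqP => // zE; exfalso; apply: Rz; rewrite zE; apply: mem_set.
  exact: fX_Rs.
apply: sum_zero => z; rewrite Tz; case: ifP => [/set_mem Rz|_] //=.
rewrite /delta; case: eqP => // tE; exfalso; apply: Dt; rewrite tE.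
by apply: mem_set; exact: finvX_D.
Qed.

Lemma inter_P A y : Gen0 r A -> M y -> T (P A y) = bs_P D A (T y).
Proof.
move=> GA My; have [l [ul zl ye]] := T_repr My.
rewrite {1}ye (@lin_sum _ _ _ _ _ _ (linP GA)).
under eq_bigr do rewrite (linZ _ _ (linP GA)).
rewrite T_sum; last by move=> z; exact: im_P.
apply: funext => t /=.
have Tz z : T (P A (iotaT z)) =
    if z \in D A then delta z else (fun _ => 0).
  by rewrite act_P //; case: ifP => _; [exact: T_eq (repr_iota _)|exact: T_eq repr0].
rewrite /bs_P; case: ifP => [Dt|Dt].
  apply: sum_pick ul zl _ => z; rewrite Tz.
  case: ifP => [Dz|Dz] /=.
    by rewrite /delta eq_sym.
  by case: eqP => // zE; rewrite zE Dt in Dz.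
apply: sum_zero => z; rewrite Tz; case: ifP => [Dz|_] //=.
by rewrite /delta; case: eqP => // tE; rewrite tE Dz in Dt.
Qed.

Lemma equiv_ok : equivalent_to_induced r P S Ss true Rs D fX finvX.
Proof.
exists T; split.
- by move=> a x y Mx My; exact: T_lin.
- move=> x Mx _; have [l [ul zl _]] := T_repr Mx.
  apply: sub_finite_set (finite_seq l) => z /= nz.
  by case: (boolP (z \in l)) => // /zl h; rewrite h eqxx in nz.
- move=> x y Mx My Txy.
  have [l1 [u1 z1 e1]] := T_repr Mx; have [l2 [u2 z2 e2]] := T_repr My.
  rewrite Txy in z1 e1.
  have [uu s1 s2] := union_facts l1 l2.
  by rewrite e1 [RHS]e2 (extend u1 uu s1 z1) (extend u2 uu s2 z2).
- move=> phi /(_ isT) fin.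
  pose l := finmap.enum_fset (fset_set [set z | phi z != 0]).
  have Hr : repr (\sum_(z <- l) phi z *: iotaT z) phi.
    exists l; split => //; first exact: finmap.fset_uniq.
    move=> z zn; apply/eqP; apply: contraNT zn => nz.
    by rewrite in_fset_set //; apply: mem_set.
  exists (\sum_(z <- l) phi z *: iotaT z); last exact: T_eq Hr.
  by apply: M_sum => z; apply: im_scale; exact: M_iota.
- move=> x Mx; split; first by move=> e; exact: inter_S.
  split; first by move=> e; exact: inter_Ss.
  by move=> A GA; exact: inter_P.
Qed.

Lemma main_sec : exists (X0 : Type) (fin : bool) (Rs0 : E -> set X0)
    (D0 : set V -> set X0) (f finv : E -> X0 -> X0),
  branching_system s r Rs0 D0 f finv /\
  equivalent_to_induced r P S Ss fin Rs0 D0 f finv.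
Proof. by exists X, true, Rs, D, fX, finvX; split; [exact: bs_ok|exact: equiv_ok]. Qed.

End Main.

Theorem mainTheorem10 (V E : choiceType) (s : E -> V) (r : E -> set V)
  (r_nonempty : forall e, r e !=set0)
  (n : nat) (n_ge1 : (1 <= n)%N)
  (X_nonempty : forall i, (1 <= i <= n)%N -> Xk s r i !=set0)
  (cover : (\bigcup_e r e) `|` range s =
           [set v | exists i, (1 <= i <= n)%N /\ (Xbar s r i v \/ Ik s r i v)])
  (R : fieldType) (N : lmodType R)
  (P : set V -> N -> N) (S Ss : E -> N -> N)
  (Hrep : is_rep s r P S Ss)
  (Hrange : forall e, internal_dsum (P (r e) @` setT) (r e)
                        (fun v => P [set v] @` setT))
  (Hsrc : forall v, s @^-1` [set v] !=set0 ->
            internal_dsum (P [set v] @` setT) (s @^-1` [set v])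
                          (fun e => (fun x => S e (Ss e x)) @` setT)) :
  exists (X : Type) (fin : bool) (Rs : E -> set X) (D : set V -> set X)
         (f finv : E -> X -> X),
    branching_system s r Rs D f finv /\
    equivalent_to_induced r P S Ss fin Rs D f finv.
Proof.
have HB0 : forall w, exists Bw : set N, [/\ Bw `<=` P [set w] @` setT, indep Bw
                          & P [set w] @` setT `<=` spanned Bw].
  move=> w; case: Hrep => [[HlP _ _] _ _ _ _].
  have lw := HlP _ (Gen0_vertex r w).
  apply: basis_exists.
    by exists 0 => //; exact: lin0.
  move=> a _ _ [x _ <-] [y _ <-]; exists (a *: x + y) => //.
  exact: lw.
have [B HB] := choice HB0.
exact: (main_sec Hrep Hrange Hsrc (all_Acc cover) HB).
Qed.
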